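(* Let $Z,V,Y$ be random variables and $f:\mathbb{R}\times\mathcal{V}\to\mathbb{R}$ a measurable function such that: (i) $f(z,v)$ is non-increasing in $z$ for every $v$; (ii) $Z$ and $V$ are conditionally independent given $Y$; (iii) $\mathbb{E}(Z\mid Y)=\mathbb{E}(Z)$ almost surely. Assume $Z$, $f(Z,V)$, $Zf(Z,V)$ and $f(\mathbb{E}Z,V)$ are integrable (and $Zf(\mathbb{E}Z,V)$ integrable). Then $$\mathbb{E}[Z f(Z,V)]\le \mathbb{E}(Z)\,\mathbb{E}[f(Z,V)].$$ *)

(* Defs.v *)
From HB Require Import structures.
From mathcomp Require Import all_boot all_order all_algebra.
From mathcomp Require Import all_classical all_reals all_analysis.
Set Implicit Arguments. Unset Strict Implicit. Unset Printing Implicit Defensive.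
Import Order.TTheory GRing.Theory Num.Theory.
Local Open Scope classical_set_scope.
Local Open Scope ring_scope.

(* [g] is a version of the conditional expectation E[X | sigma(Y)]:
   g is sigma(Y)-measurable (g = h o Y with h measurable), integrable,
   and has the same integrals as X over every set of sigma(Y). *)
Definition cond_exp_version {d dY : measure_display} {T : measurableType d}
  {TY : measurableType dY} {R : realType} (P : probability T R)
  (Y : T -> TY) (X : T -> R) (g : T -> R) : Prop :=
  (exists h : TY -> R, measurable_fun setT h /\ g = h \o Y) /\
  P.-integrable setT (EFin \o g) /\
  forall B : set TY, measurable B ->
    (\int[P]_(x in Y @^-1` B) (X x)%:E = \int[P]_(x in Y @^-1` B) (g x)%:E)%E.

(* Z and V are conditionally independent given Y:
   P(Z in A, V in B | Y) = P(Z in A | Y) P(V in B | Y) a.s., for all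
   measurable A, B. *)
Definition cond_indep {d dV dY : measure_display} {T : measurableType d}
  {TV : measurableType dV} {TY : measurableType dY} {R : realType}
  (P : probability T R) (Z : T -> R) (V : T -> TV) (Y : T -> TY) : Prop :=
  forall (A : set R) (B : set TV), measurable A -> measurable B ->
  exists gA gB gAB : T -> R,
    [/\ cond_exp_version P Y (\1_(Z @^-1` A)) gA,
        cond_exp_version P Y (\1_(V @^-1` B)) gB,
        cond_exp_version P Y (\1_(Z @^-1` A `&` V @^-1` B)) gAB &
        {ae P, forall x, gAB x = gA x * gB x}].

(* Main.v *)
Require Import Defs.
From HB Require Import structures.
From mathcomp Require Import all_boot all_order all_algebra.
From mathcomp Require Import all_classical all_reals all_analysis.
Import Order.TTheory GRing.Theory Num.Theory.
Local Open Scope classical_set_scope.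
Local Open Scope ring_scope.
From mathcomp Require Import measurable_realfun simple_functions measurable_fun_approximation lebesgue_integral_definition lebesgue_integral_nonneg lebesgue_integrable lebesgue_integral_dominated_convergence lebesgue_Rintegral.
From mathcomp Require Import lra.
Set Implicit Arguments. Unset Strict Implicit. Unset Printing Implicit Defensive.
Import numFieldNormedType.Exports.
Import HBSimple HBNNSimple.
Lemma null_lt d (T : measurableType d) (R : realType)
  (mu : {measure set T -> \bar R}) (D : set T) (f1 f2 : T -> R) :
  measurable D -> mu.-integrable D (EFin \o f1) -> mu.-integrable D (EFin \o f2) ->
  (forall x, D x -> f1 x < f2 x) ->
  (\int[mu]_(x in D) (f2 x)%:E <= \int[mu]_(x in D) (f1 x)%:E)%E -> mu D = 0.
Proof.
move=> mD i1 i2 lt12 le21.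
pose F : T -> \bar R := fun x => ((f2 x)%:E - (f1 x)%:E)%E.
have mF : measurable_fun D F.
  apply: emeasurable_funB; [exact: measurable_int i2|exact: measurable_int i1].
have H0 : (\int[mu]_(x in D) `|(f2 x)%:E - (f1 x)%:E| = 0)%E.
  transitivity (\int[mu]_(x in D) ((f2 x)%:E - (f1 x)%:E))%E.
    apply: eq_integral => x /[!inE] Dx.
    by rewrite gee0_abs// subre_ge0// lee_fin ltW//; exact: lt12.
  apply/eqP; rewrite eq_le; apply/andP; split.
    by rewrite integralB_EFin// sube_le0.
  by apply: integral_ge0 => x Dx; rewrite subre_ge0// lee_fin ltW//; exact: lt12.
have [N [mN N0 sub]] := (ae_eq_integral_abs mu mD mF).1 H0.
apply: (subset_measure0 mD mN _ N0) => x Dx; apply: sub => /= /(_ Dx).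
rewrite /F -EFinB => /(congr1 fine) /= /eqP.
by rewrite subr_eq0 (gt_eqF (lt12 _ Dx)).
Qed.

Lemma mset_lt dY (TY : measurableType dY) (R : realType) (u v : TY -> R) :
  measurable_fun setT u -> measurable_fun setT v -> measurable [set y | u y < v y].
Proof.
move=> mu mv; have := measurable_fun_ltr mu mv measurableT.
by move/(_ [set true] I); rewrite setTI.
Qed.

Lemma mpre d dY (T : measurableType d) (TY : measurableType dY) (Y : T -> TY)
  (mY : measurable_fun setT Y) (B : set TY) : measurable B -> measurable (Y @^-1` B).
Proof. by move=> mB; rewrite -[_ @^-1` _]setTI; exact: mY. Qed.

Lemma int_pre d dY (T : measurableType d) (TY : measurableType dY) (R : realType)
  (mu : {measure set T -> \bar R}) (Y : T -> TY) (X : T -> R) (B : set TY) :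
  (\int[mu]_(x in Y @^-1` B) (X x)%:E = \int[mu]_x (X x * \1_B (Y x))%:E)%E.
Proof.
rewrite integral_mkcond; apply: eq_integral => x _; rewrite patchE indicE.
have [YB|YB] := boolP (Y x \in B).
  by rewrite mem_set ?mulr1 //; exact/set_mem.
by rewrite memNset ?mulr0//= -notin_setE.
Qed.

Lemma ce_uniq d dY (T : measurableType d) (TY : measurableType dY) (R : realType)
  (P : probability T R) (Y : T -> TY) (mY : measurable_fun setT Y) (X g1 g2 : T -> R) :
  cond_exp_version P Y X g1 -> cond_exp_version P Y X g2 ->
  {ae P, forall x, g1 x = g2 x}.
Proof.
move=> [[h1 [mh1 ->]] [i1 e1]] [[h2 [mh2 ->]] [i2 e2]].
have key (u v : TY -> R) : measurable_fun setT u -> measurable_fun setT v ->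
    P.-integrable setT (EFin \o (u \o Y)) -> P.-integrable setT (EFin \o (v \o Y)) ->
    (forall B, measurable B -> (\int[P]_(x in Y @^-1` B) (X x)%:E =
       \int[P]_(x in Y @^-1` B) ((u \o Y) x)%:E)%E) ->
    (forall B, measurable B -> (\int[P]_(x in Y @^-1` B) (X x)%:E =
       \int[P]_(x in Y @^-1` B) ((v \o Y) x)%:E)%E) ->
    P (Y @^-1` [set y | u y < v y]) = 0.
  move=> mu mv iu iv eu ev.
  have mB := mset_lt mu mv; have mD := mpre mY mB.
  apply: (null_lt mD (f1 := u \o Y) (f2 := v \o Y)).
  - exact: integrableS iu.
  - exact: integrableS iv.
  - by move=> x.
  - by rewrite -(ev _ mB) -(eu _ mB).
have N1 := key _ _ mh1 mh2 i1 i2 e1 e2.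
have N2 := key _ _ mh2 mh1 i2 i1 e2 e1.
have mN1 := mpre mY (mset_lt mh1 mh2).
have mN2 := mpre mY (mset_lt mh2 mh1).
exists (Y @^-1` [set y | h1 y < h2 y] `|` Y @^-1` [set y | h2 y < h1 y]).
split; [exact: measurableU|exact: null_set_setU|].
move=> x /= neq; have [lt|lt|eq] := ltgtP (h1 (Y x)) (h2 (Y x)).
- by left.
- by right.
- by exfalso; apply: neq.
Qed.

Lemma ce_bound d dY (T : measurableType d) (TY : measurableType dY) (R : realType)
  (P : probability T R) (Y : T -> TY) (mY : measurable_fun setT Y) (A : set T)
  (mA : measurable A) (g : T -> R) :
  cond_exp_version P Y (\1_A) g -> {ae P, forall x, 0 <= g x <= 1}.
Proof.
move=> [[h [mh ->]] [ig eg]].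
have mc (c : R) : measurable_fun setT (fun _ : TY => c) by exact: measurable_cst.
have iA (D : set T) : measurable D -> P.-integrable D (EFin \o (\1_A : T -> R)).
  move=> mD; apply: (integrableS measurableT) => //.
  exact: (integrable_indic P mA).
have N1 : P (Y @^-1` [set y | h y < 0]) = 0.
  have mB := mset_lt mh (mc 0); have mD := mpre mY mB.
  apply: (null_lt mD (f1 := h \o Y) (f2 := cst 0)).
  - exact: integrableS ig.
  - exact: finite_measure_integrable_cst.
  - by move=> x.
  - rewrite -(eg _ mB) integral0; apply: integral_ge0 => x _.
    by rewrite lee_fin indicE.
have N2 : P (Y @^-1` [set y | 1 < h y]) = 0.
  have mB := mset_lt (mc 1) mh; have mD := mpre mY mB.
  apply: (null_lt mD (f1 := cst 1) (f2 := h \o Y)).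
  - exact: finite_measure_integrable_cst.
  - exact: integrableS ig.
  - by move=> x.
  - rewrite -(eg _ mB); apply: le_integral => //; first exact: iA.
      exact: finite_measure_integrable_cst.
    by move=> x _; rewrite lee_fin indicE /=; case: (_ \in _).
have mN1 := mpre mY (mset_lt mh (mc 0)).
have mN2 := mpre mY (mset_lt (mc 1) mh).
exists (Y @^-1` [set y | h y < 0] `|` Y @^-1` [set y | 1 < h y]).
split; [exact: measurableU|exact: null_set_setU|].
move=> x /= H; have [lt0|ge0] := ltP (h (Y x)) 0; first by left.
right => /=; rewrite ltNge; apply/negP => le1; apply: H; by rewrite ge0 le1.
Qed.

Lemma mint d (T : measurableType d) (R : realType) (mu : {measure set T -> \bar R})
  (c : T -> R) : mu.-integrable setT (EFin \o c) -> measurable_fun setT c.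
Proof. by move=> /integrableP[/measurable_EFinP]. Qed.

Lemma int_mulind d dS (T : measurableType d) (S : measurableType dS) (R : realType)
  (mu : {measure set T -> \bar R}) (U : T -> S) (mU : measurable_fun setT U)
  (c : T -> R) (ic : mu.-integrable setT (EFin \o c)) (A : set S) :
  measurable A -> mu.-integrable setT (fun x => (c x * \1_A (U x))%:E).
Proof.
move=> mA; apply: le_integrable (ic).
  exact: measurableT.
  apply: (@measurable_EFinP _ _ _ _ (fun x => c x * \1_A (U x))).2.
  apply: measurable_funM; first exact: mint ic.
  by apply: measurableT_comp => //; exact: measurable_indic.
move=> x _ /=; rewrite lee_fin normrM indicE.
by case: (_ \in _); rewrite ?normr1 ?normr0 ?mulr1 ?mulr0.
Qed.

Lemma G_simple d dS (T : measurableType d) (S : measurableType dS) (R : realType)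
  (mu : {measure set T -> \bar R}) (U : T -> S) (mU : measurable_fun setT U)
  (a b : T -> R)
  (ia : mu.-integrable setT (EFin \o a)) (ib : mu.-integrable setT (EFin \o b))
  (hab : forall A, measurable A ->
     (\int[mu]_x (a x * \1_A (U x))%:E = \int[mu]_x (b x * \1_A (U x))%:E)%E)
  (s : {sfun S >-> R}) :
  (\int[mu]_x (a x * s (U x))%:E = \int[mu]_x (b x * s (U x))%:E)%E.
Proof.
have E (c : T -> R) : (fun x => (c x * s (U x))%:E) = (fun x =>
    \sum_(y <- finmap.enum_fset (fset_set (range s)))
      (y%:E * (c x * \1_(s @^-1` [set y]) (U x))%:E))%E.
  apply/funext => x; rewrite fimfunE fsbig_finite ?fimfunP// mulr_sumr.
  rewrite (eq_bigr (fun y => (y * (c x * \1_(s @^-1` [set y]) (U x)))%:E)); last first.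
    by move=> y _; rewrite EFinM.
  by rewrite sumEFin; congr EFin; apply: eq_bigr => y _; rewrite mulrCA.
have iE (c : T -> R) : mu.-integrable setT (EFin \o c) ->
  (\int[mu]_x (c x * s (U x))%:E = \sum_(y <- finmap.enum_fset (fset_set (range s)))
      (y%:E * \int[mu]_x (c x * \1_(s @^-1` [set y]) (U x))%:E))%E.
  move=> ic.
  have mS y : measurable (s @^-1` [set y]).
    exact: (measurable_funPTI s (measurable_set1 y)).
  have iy y : mu.-integrable setT
      (fun x => (c x * \1_(s @^-1` [set y]) (U x))%:E).
    exact: (int_mulind mU ic (mS y)).
  rewrite E integral_sum; [|exact: measurableT|move=> y; apply: integrableZl => //; exact: iy].
  by apply: eq_bigr => y _; rewrite integralZl.
rewrite (iE _ ia) (iE _ ib); apply: eq_bigr => y _; rewrite hab//.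
Qed.

Lemma dct_seq d dS (T : measurableType d) (S : measurableType dS) (R : realType)
  (mu : {measure set T -> \bar R}) (U : T -> S) (mU : measurable_fun setT U)
  (w : S -> R) (mw : measurable_fun setT w) (s : nat -> {nnsfun S >-> R})
  (s_le : forall n y, s n y <= w y) (s_cvg : forall y, (fun n => s n y) @ \oo --> w y)
  (c : T -> R) (ic : mu.-integrable setT (EFin \o c))
  (icw : mu.-integrable setT (fun x => (c x * w (U x))%:E)) :
  (fun n => \int[mu]_x (c x * s n (U x))%:E)%E @ \oo --> (\int[mu]_x (c x * w (U x))%:E)%E.
Proof.
have mc := mint ic.
have mfn n : measurable_fun setT (fun x => (c x * s n (U x))%:E).
  apply (proj2 (@measurable_EFinP _ _ _ _ (fun x => c x * s n (U x)))).
  apply: measurable_funM => //; apply: measurableT_comp => //.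
have mf : measurable_fun setT (fun x => (c x * w (U x))%:E).
  apply: (@measurable_EFinP _ _ _ _ (fun x => c x * w (U x))).2.
  by apply: measurable_funM => //; apply: measurableT_comp.
have fcv : {ae mu, forall x, setT x ->
    (fun n => (c x * s n (U x))%:E) @ \oo --> (c x * w (U x))%:E}.
  apply: aeW => x _; apply: cvg_EFin; first exact: nearW.
  exact: cvgMl_tmp (s_cvg (U x)).
have ig := integrable_abse icw.
have fg : {ae mu, forall x n, setT x ->
    (`|(c x * s n (U x))%:E| <= (abse \o (fun x => (c x * w (U x))%:E)) x)%E}.
  apply: aeW => x n _; rewrite /= lee_fin !normrM ler_wpM2l //.
  have h0 : 0 <= s n (U x) by exact: fun_ge0.
  by rewrite !ger0_norm ?s_le // (le_trans h0 (s_le n (U x))).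
by have [] := dominated_convergence measurableT mfn mf fcv ig fg.
Qed.

Lemma G_nonneg d dS (T : measurableType d) (S : measurableType dS) (R : realType)
  (mu : {measure set T -> \bar R}) (U : T -> S) (mU : measurable_fun setT U)
  (a b : T -> R)
  (ia : mu.-integrable setT (EFin \o a)) (ib : mu.-integrable setT (EFin \o b))
  (hab : forall A, measurable A ->
     (\int[mu]_x (a x * \1_A (U x))%:E = \int[mu]_x (b x * \1_A (U x))%:E)%E)
  (w : S -> R) (mw : measurable_fun setT w) (w0 : forall y, 0 <= w y)
  (iaw : mu.-integrable setT (fun x => (a x * w (U x))%:E))
  (ibw : mu.-integrable setT (fun x => (b x * w (U x))%:E)) :
  (\int[mu]_x (a x * w (U x))%:E = \int[mu]_x (b x * w (U x))%:E)%E.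
Proof.
have mwE : measurable_fun setT (EFin \o w) by exact/measurable_EFinP.
have w0E : forall y, setT y -> (0 <= (EFin \o w) y)%E by move=> y _; rewrite lee_fin.
pose s := nnsfun_approx measurableT mwE.
have s_le n y : s n y <= w y.
  rewrite /s nnsfun_approxE -lee_fin; exact: le_approx.
have s_cvg y : (fun n => s n y) @ \oo --> w y.
  rewrite (_ : (fun n => s n y) = (approx setT (EFin \o w))^~ y); last first.
    by apply/funext => n; rewrite /s nnsfun_approxE.
  exact: (cvg_approx w0E (x := y) I (ltry _)).
have cva := dct_seq mU mw s_le s_cvg ia iaw.
have cvb := dct_seq mU mw s_le s_cvg ib ibw.
have eqs : (fun n => \int[mu]_x (a x * s n (U x))%:E)%E =
           (fun n => \int[mu]_x (b x * s n (U x))%:E)%E.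
  by apply/funext => n; exact: G_simple.
rewrite eqs in cva.
exact: (cvg_unique (@ereal_hausdorff R) cva cvb).
Qed.

Lemma G_gen d dS (T : measurableType d) (S : measurableType dS) (R : realType)
  (mu : {measure set T -> \bar R}) (U : T -> S) (mU : measurable_fun setT U)
  (a b : T -> R)
  (ia : mu.-integrable setT (EFin \o a)) (ib : mu.-integrable setT (EFin \o b))
  (hab : forall A, measurable A ->
     (\int[mu]_x (a x * \1_A (U x))%:E = \int[mu]_x (b x * \1_A (U x))%:E)%E)
  (w : S -> R) (mw : measurable_fun setT w)
  (iaw : mu.-integrable setT (fun x => (a x * w (U x))%:E))
  (ibw : mu.-integrable setT (fun x => (b x * w (U x))%:E)) :
  (\int[mu]_x (a x * w (U x))%:E = \int[mu]_x (b x * w (U x))%:E)%E.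
Proof.
pose wp := fun y => Num.max (w y) 0.
pose wn := fun y => Num.max (- w y) 0.
have mwp : measurable_fun setT wp.
  by apply: (@measurable_maxr _ _ _ _ w (cst 0)) => //.
have mwn : measurable_fun setT wn.
  apply: (@measurable_maxr _ _ _ _ (fun y => - w y) (cst 0)) => //.
  exact: measurableT_comp.
have wE y : w y = wp y - wn y.
  rewrite /wp /wn /=; have [h|h] := leP 0 (w y).
    by rewrite (max_idPr _) ?subr0 // oppr_le0.
  by rewrite (max_idPl _) ?sub0r ?opprK // oppr_ge0 ltW.
have wp0 y : 0 <= wp y by rewrite /wp /= le_max lexx orbT.
have wn0 y : 0 <= wn y by rewrite /wn /= le_max lexx orbT.
have wpb y : `|wp y| <= `|w y|.
  by rewrite /wp /=; have [h|h] := leP 0 (w y); rewrite ?normr0.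
have wnb y : `|wn y| <= `|w y|.
  rewrite /wn /=; have [h|h] := leP 0 (w y).
    by rewrite (max_idPr _) ?normr0 // oppr_le0.
  by rewrite (max_idPl _) ?normrN // oppr_ge0 ltW.
have iw (c : T -> R) (v : S -> R) : measurable_fun setT v ->
    (forall y, `|v y| <= `|w y|) -> mu.-integrable setT (EFin \o c) ->
    mu.-integrable setT (fun x => (c x * w (U x))%:E) ->
    mu.-integrable setT (fun x => (c x * v (U x))%:E).
  move=> mv vb ic icw; apply: le_integrable (icw).
    exact: measurableT.
    apply (proj2 (@measurable_EFinP _ _ _ _ (fun x => c x * v (U x)))).
    apply: measurable_funM; first exact: mint ic.
    exact: measurableT_comp.
  by move=> x _ /=; rewrite lee_fin !normrM ler_wpM2l.
have split (c : T -> R) : mu.-integrable setT (EFin \o c) ->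
    mu.-integrable setT (fun x => (c x * w (U x))%:E) ->
    (\int[mu]_x (c x * w (U x))%:E = \int[mu]_x (c x * wp (U x))%:E
       - \int[mu]_x (c x * wn (U x))%:E)%E.
  move=> ic icw.
  rewrite -(integralB_EFin measurableT (iw _ _ mwp wpb ic icw) (iw _ _ mwn wnb ic icw)).
  by apply: eq_integral => x _; rewrite -EFinB -mulrBr -wE.
rewrite (split _ ia iaw) (split _ ib ibw).
rewrite (G_nonneg mU ia ib hab mwp wp0 (iw _ _ mwp wpb ia iaw) (iw _ _ mwp wpb ib ibw)).
by rewrite (G_nonneg mU ia ib hab mwn wn0 (iw _ _ mwn wnb ia iaw) (iw _ _ mwn wnb ib ibw)).
Qed.

Lemma int_mul_bdd d (T : measurableType d) (R : realType) (mu : {measure set T -> \bar R})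
  (u c : T -> R) : measurable_fun setT c -> (forall x, `|c x| <= 1) ->
  mu.-integrable setT (EFin \o u) -> mu.-integrable setT (fun x => (u x * c x)%:E).
Proof.
move=> mc cb iu; apply: le_integrable (iu); first exact: measurableT.
  apply (proj2 (@measurable_EFinP _ _ _ _ (fun x => u x * c x))).
  by apply: measurable_funM => //; exact: mint iu.
move=> x _ /=; rewrite lee_fin normrM.
by rewrite -[leRHS]mulr1 ler_wpM2l.
Qed.

Lemma int_bdd d (T : measurableType d) (R : realType) (P : probability T R)
  (c : T -> R) : measurable_fun setT c -> (forall x, `|c x| <= 1) ->
  P.-integrable setT (EFin \o c).
Proof.
move=> mc cb.
have := int_mul_bdd (u := cst 1) mc cb (finite_measure_integrable_cst P 1 measurableT).
by apply: eq_integrable => // x _ /=; rewrite mul1r.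
Qed.

Lemma ae_int d (T : measurableType d) (R : realType) (mu : {measure set T -> \bar R})
  (F1 F2 : T -> R) : measurable_fun setT F1 -> measurable_fun setT F2 ->
  {ae mu, forall x, F1 x = F2 x} ->
  (\int[mu]_x (F1 x)%:E = \int[mu]_x (F2 x)%:E)%E.
Proof.
move=> m1 m2 ae; apply: (ae_eq_integral (fun x => (F2 x)%:E)) => //.
- exact/measurable_EFinP.
- exact/measurable_EFinP.
- by apply: filterS ae => x /= -> _.
Qed.

Lemma ce_pre d dY (T : measurableType d) (TY : measurableType dY) (R : realType)
  (P : probability T R) (Y : T -> TY) (X g : T -> R) :
  cond_exp_version P Y X g -> forall C, measurable C ->
  (\int[P]_x (X x * \1_C (Y x))%:E = \int[P]_x (g x * \1_C (Y x))%:E)%E.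
Proof. by move=> [_ [_ e]] C mC; rewrite -!int_pre e. Qed.

Lemma ce_total d dY (T : measurableType d) (TY : measurableType dY) (R : realType)
  (P : probability T R) (Y : T -> TY) (X g : T -> R) :
  cond_exp_version P Y X g ->
  (\int[P]_x (X x)%:E = \int[P]_x (g x)%:E)%E.
Proof. by move=> [_ [_ e]]; have := e _ measurableT; rewrite preimage_setT. Qed.

Definition clamp01 (R : realType) (r : R) := Num.min (Num.max r 0) 1.

Lemma clamp01_bd (R : realType) (r : R) : `|clamp01 r| <= 1.
Proof.
rewrite /clamp01 ger0_norm; first by rewrite ge_min lexx orbT.
by rewrite le_min ler01 andbT le_max lexx orbT.
Qed.

Lemma clamp01_id (R : realType) (r : R) : 0 <= r <= 1 -> clamp01 r = r.
Proof. by case/andP=> r0 r1; rewrite /clamp01 (max_idPl r0) (min_idPl r1). Qed.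

Lemma clamp01_meas dY (TY : measurableType dY) (R : realType) (h : TY -> R) :
  measurable_fun setT h -> measurable_fun setT (fun y => clamp01 (h y)).
Proof.
move=> mh; apply: (@measurable_minr _ _ _ _ (fun y => Num.max (h y) 0) (cst 1)) => //.
exact: (@measurable_maxr _ _ _ _ h (cst 0)).
Qed.

Lemma ind_bd (X : Type) (R : realType) (A : set X) (x : X) : `|\1_A x : R| <= 1.
Proof. by rewrite indicE; case: (_ \in _); rewrite ?normr1 ?normr0. Qed.

Lemma ind_meas d dS (T : measurableType d) (S : measurableType dS) (R : realType)
  (U : T -> S) (mU : measurable_fun setT U) (A : set S) : measurable A ->
  measurable_fun setT (fun x => \1_A (U x) : R).
Proof. by move=> mA; apply: measurableT_comp => //; exact: measurable_indic. Qed.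

Lemma int_mul_bdd' d (T : measurableType d) (R : realType) (mu : {measure set T -> \bar R})
  (u c : T -> R) : measurable_fun setT c -> (forall x, `|c x| <= 1) ->
  mu.-integrable setT (EFin \o u) -> mu.-integrable setT (fun x => (c x * u x)%:E).
Proof.
move=> mc cb iu; have := int_mul_bdd mc cb iu.
by apply: eq_integrable => // x _; rewrite mulrC.
Qed.

Lemma KB d dV dY (T : measurableType d) (TV : measurableType dV)
  (TY : measurableType dY) (R : realType)
  (P : probability T R) (Z : T -> R) (V : T -> TV) (Y : T -> TY)
  (mZ : measurable_fun setT Z) (mV : measurable_fun setT V)
  (mY : measurable_fun setT Y) (hCI : cond_indep P Z V Y)
  (g : T -> R) (gCE : cond_exp_version P Y Z g) (m : R)
  (gae : {ae P, forall x, g x = m})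
  (iZ : P.-integrable setT (EFin \o Z)) (B : set TV) (mB : measurable B) :
  (\int[P]_x (Z x * \1_B (V x))%:E = \int[P]_x (m * \1_B (V x))%:E)%E.
Proof.
have [gA0 [gB0 [gAB0 [_ cB0 _ _]]]] := hCI setT B measurableT mB.
have [[hB0 [mhB0 gB0E]] _] := cB0.
subst gB0.
pose w0 := fun y => clamp01 (hB0 y).
have mw0 : measurable_fun setT w0 := clamp01_meas mhB0.
have w0b y : `|w0 y| <= 1 := clamp01_bd _.
have mw0Y : measurable_fun setT (fun x => w0 (Y x)) := measurableT_comp mw0 mY.
have mVB : measurable (V @^-1` B) := mpre mV mB.
have bnd0 := ce_bound mY mVB cB0.
have gw : {ae P, forall x, hB0 (Y x) = w0 (Y x)}.
  by apply: filterS bnd0 => x hx; rewrite /w0 clamp01_id.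
have mg : measurable_fun setT g := mint (proj1 (proj2 gCE)).
have iB : P.-integrable setT (EFin \o (fun x => \1_B (V x) : R)).
  by apply: int_bdd; [exact: ind_meas|move=> x; exact: ind_bd].
have iw0 : P.-integrable setT (EFin \o (fun x => w0 (Y x))).
  by apply: int_bdd => // x; exact: w0b.
have hab : forall A, measurable A ->
    (\int[P]_x (\1_B (V x) * \1_A (Z x))%:E = \int[P]_x (w0 (Y x) * \1_A (Z x))%:E)%E.
  move=> A mA.
  have [gA [gB [gAB [cA cB cAB ae1]]]] := hCI A B mA mB.
  have mZA := mpre mZ mA.
  have uq := ce_uniq mY cB cB0.
  have mgA : measurable_fun setT gA := mint (proj1 (proj2 cA)).
  have mgB : measurable_fun setT gB := mint (proj1 (proj2 cB)).
  have mgAB : measurable_fun setT gAB := mint (proj1 (proj2 cAB)).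
  transitivity (\int[P]_x (\1_(Z @^-1` A `&` V @^-1` B) x)%:E)%E.
    by apply: eq_integral => x _; rewrite indicI /= mulrC.
  rewrite (ce_total cAB).
  rewrite (ae_int mgAB (measurable_funM mgA mgB) ae1).
  have mgAw := measurable_funM mgA mw0Y.
  rewrite (ae_int (measurable_funM mgA mgB) mgAw); last first.
    by apply: (filterS2 _ _ uq gw) => x /= h1 h2; rewrite h1 /= h2.
  have iA : P.-integrable setT (EFin \o (fun x => \1_A (Z x) : R)).
    by apply: int_bdd; [exact: ind_meas|move=> x; exact: ind_bd].
  have := @G_gen _ _ _ _ _ P Y mY (fun x => \1_A (Z x)) gA iA (proj1 (proj2 cA))
    (ce_pre cA) w0 mw0 (int_mul_bdd mw0Y (fun x => w0b (Y x)) iA)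
    (int_mul_bdd mw0Y (fun x => w0b (Y x)) (proj1 (proj2 cA))).
  move=> <-; by apply: eq_integral => x _; rewrite mulrC.
have mid : measurable_fun setT (fun r : R => r) by exact: measurable_id.
have stepZ := @G_gen _ _ _ _ _ P Z mZ (fun x => \1_B (V x)) (fun x => w0 (Y x))
  iB iw0 hab (fun r => r) mid
  (int_mul_bdd' (ind_meas mV mB) (fun x => @ind_bd _ R B (V x)) iZ)
  (int_mul_bdd' mw0Y (fun x => w0b (Y x)) iZ).
have ig : P.-integrable setT (EFin \o g) := proj1 (proj2 gCE).
have stepY := @G_gen _ _ _ _ _ P Y mY Z g iZ ig (ce_pre gCE) w0 mw0
  (int_mul_bdd mw0Y (fun x => w0b (Y x)) iZ) (int_mul_bdd mw0Y (fun x => w0b (Y x)) ig).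
transitivity (\int[P]_x (\1_B (V x) * Z x)%:E)%E.
  by apply: eq_integral => x _; rewrite mulrC.
rewrite stepZ.
transitivity (\int[P]_x (Z x * w0 (Y x))%:E)%E.
  by apply: eq_integral => x _; rewrite mulrC.
rewrite stepY.
rewrite (ae_int (measurable_funM mg mw0Y) (measurable_funM (measurable_cst m) mw0Y)
  (F2 := fun x => m * w0 (Y x))); last first.
  by apply: filterS gae => x /= ->.
transitivity (m%:E * \int[P]_x (w0 (Y x))%:E)%E.
  rewrite -(integralZl measurableT iw0).
  by apply: eq_integral => x _; rewrite EFinM.
transitivity (m%:E * \int[P]_x (\1_B (V x))%:E)%E; last first.
  rewrite -(integralZl measurableT iB).
  by apply: eq_integral => x _; rewrite EFinM.
congr (_ * _)%E.
rewrite -(ae_int (measurableT_comp mhB0 mY) mw0Y gw).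
by rewrite -(ce_total cB0).
Qed.

Theorem mainTheorem7 (d dV dY : measure_display) (T : measurableType d)
  (TV : measurableType dV) (TY : measurableType dY) (R : realType)
  (P : probability T R) (Z : T -> R) (V : T -> TV) (Y : T -> TY)
  (f : R -> TV -> R)
  (mZ : measurable_fun setT Z) (mV : measurable_fun setT V)
  (mY : measurable_fun setT Y)
  (mf : measurable_fun setT (fun p : R * TV => f p.1 p.2))
  (f_noninc : forall (v : TV) (z1 z2 : R), z1 <= z2 -> f z2 v <= f z1 v)
  (hCI : cond_indep P Z V Y)
  (hCE : exists g : T -> R, cond_exp_version P Y Z g /\
          {ae P, forall x, g x = fine (\int[P]_y (Z y)%:E)%E})
  (iZ : P.-integrable setT (EFin \o Z))
  (ifZV : P.-integrable setT (fun x => (f (Z x) (V x))%:E))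
  (iZfZV : P.-integrable setT (fun x => (Z x * f (Z x) (V x))%:E))
  (ifEV : P.-integrable setT
            (fun x => (f (fine (\int[P]_y (Z y)%:E)%E) (V x))%:E))
  (iZfEV : P.-integrable setT
            (fun x => (Z x * f (fine (\int[P]_y (Z y)%:E)%E) (V x))%:E)) :
  (\int[P]_x (Z x * f (Z x) (V x))%:E
     <= (\int[P]_x (Z x)%:E) * (\int[P]_x (f (Z x) (V x))%:E))%E.
Proof.
move: hCE => [g [gCE gae]].
set m := fine (\int[P]_y (Z y)%:E)%E in gae ifEV iZfEV *.
have EZ : (\int[P]_y (Z y)%:E)%E = m%:E.
  by rewrite /m fineK //; exact: integrable_fin_num.
have mk : measurable_fun setT (fun v => f m v) := measurable_fun_pair2 m mf.
have iK2 : P.-integrable setT (fun x => (m * f m (V x))%:E).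
  have := integrableZl measurableT m ifEV.
  by apply: eq_integrable => // x _; rewrite EFinM.
have iM : P.-integrable setT (fun x => (m * f (Z x) (V x))%:E).
  have := integrableZl measurableT m ifZV.
  by apply: eq_integrable => // x _; rewrite EFinM.
have KL : (\int[P]_x (Z x * f m (V x))%:E = \int[P]_x (m * f m (V x))%:E)%E.
  exact: (@G_gen _ _ _ _ _ P V mV Z (cst m) iZ
    (finite_measure_integrable_cst P m measurableT)
    (fun B mB => KB mZ mV mY hCI gCE gae iZ mB) (fun v => f m v) mk iZfEV iK2).
rewrite EZ -(integralZl measurableT ifZV).
have iB := integrableB measurableT iZfEV iK2.
have iD := integrableD measurableT iM iB.
apply: (@le_trans _ _ (\int[P]_x ((m * f (Z x) (V x))%:E +
    ((Z x * f m (V x))%:E - (m * f m (V x))%:E)))%E).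
  apply: le_integral => //.
  move=> x _; rewrite -EFinB -EFinD lee_fin.
  have [h|h] := leP m (Z x).
    have := f_noninc (V x) _ _ h; nra.
  have := f_noninc (V x) _ _ (ltW h); nra.
rewrite integralD //.
rewrite integralB_EFin // KL subee ?adde0; last exact: integrable_fin_num.
suff -> : (\int[P]_x (m * f (Z x) (V x))%:E =
  \int[P]_x (m%:E * (f (Z x) (V x))%:E))%E by [].
by apply: eq_integral => x _; rewrite EFinM.
Qed.
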